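(* Let $d\ge1$, let $S\subset\mathbb R^d$ be a regular simplex of unit side length, let $k,z\ge1$ be integers and set $s=zkd$. Let $A_s$ be the collection of $(d+1)^s$ simplices in the $s$-stage uniform subdivision of $S$. Then at most a $z(1-e^{-d})^k$ fraction of the simplices in $A_s$ have diameter larger than $(d/(d+1))^z$.
   Context: The $i$-stage uniform subdivision of a simplex $S'$ is defined recursively: the $0$-stage subdivision is $\{S'\}$; the $(i+1)$-stage subdivision is obtained from the $i$-stage subdivision by replacing each simplex $T$ in it, with vertices $v_0,\dots,v_d$ and barycenter $b=(v_0+\dots+v_d)/(d+1)$, by the $d+1$ simplices obtained from $T$ by replacing one vertex $v_m$ with $b$ ($m=0,\dots,d$). Thus the $i$-stage subdivision consists of $(d+1)^i$ simplices. The diameter of a simplex is the largest distance between two of its vertices. *)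

(* Defs.v *)
From Stdlib Require Import Reals List Arith.
Import ListNotations.
Open Scope R_scope.

(* A point of R^d is represented as a function nat -> R; only the
   coordinates 0..d-1 are used (all geometric notions below only read them). *)
Definition point := nat -> R.

Definition dist (d : nat) (x y : point) : R :=
  sqrt (fold_right Rplus 0 (map (fun c => (x c - y c) ^ 2) (seq 0 d))).

(* A d-simplex: vertex index m (0 <= m <= d) |-> vertex v_m. *)
Definition simplex := nat -> point.

Definition barycenter (d : nat) (T : simplex) : point :=
  fun c => fold_right Rplus 0 (map (fun m => T m c) (seq 0 (S d))) / INR (S d).

Definition replace_vertex (T : simplex) (m : nat) (b : point) : simplex :=
  fun j => if Nat.eqb j m then b else T j.

Definition children (d : nat) (T : simplex) : list simplex :=
  map (fun m => replace_vertex T m (barycenter d T)) (seq 0 (S d)).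

(* i-stage uniform subdivision, as a list (multiset) of (d+1)^i simplices. *)
Fixpoint subdiv (d : nat) (i : nat) (S0 : simplex) : list simplex :=
  match i with
  | O => [S0]
  | Datatypes.S i' => flat_map (children d) (subdiv d i' S0)
  end.

Definition diameter (d : nat) (T : simplex) : R :=
  fold_right Rmax 0
    (map (fun p => dist d (T (fst p)) (T (snd p)))
         (list_prod (seq 0 (S d)) (seq 0 (S d)))).

Definition regular_unit (d : nat) (T : simplex) : Prop :=
  forall i j, (i <= d)%nat -> (j <= d)%nat -> i <> j -> dist d (T i) (T j) = 1.

Definition diam_gt (d : nat) (r : R) (T : simplex) : bool :=
  if Rlt_dec r (diameter d T) then true else false.

(* Main.v *)
Require Import Defs.
From Stdlib Require Import Reals List Arith Lra Lia.
Import ListNotations.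
Open Scope R_scope.
Open Scope bool_scope.


Definition sumR {A} (f : A -> R) (l : list A) : R := fold_right Rplus 0 (map f l).

Lemma sumR_cons {A} (f : A -> R) a l : sumR f (a :: l) = f a + sumR f l.
Proof. reflexivity. Qed.

Lemma sumR_le {A} (f g : A -> R) l :
  (forall x, In x l -> f x <= g x) -> sumR f l <= sumR g l.
Proof.
  induction l as [|a l IH]; intros H; [unfold sumR; simpl; lra|].
  rewrite !sumR_cons. pose proof (H a (or_introl eq_refl)).
  assert (sumR f l <= sumR g l) by
    (apply IH; intros; apply H; simpl; auto). lra.
Qed.

Lemma sumR_ext {A} (f g : A -> R) l :
  (forall x, f x = g x) -> sumR f l = sumR g l.
Proof. intros H; unfold sumR; rewrite (map_ext f g H); reflexivity. Qed.

Lemma sumR_ite {A} (p : A -> bool) a b l :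
  sumR (fun x => if p x then a else b) l = b * INR (length l) + (a - b) * INR (length (filter p l)).
Proof.
  induction l as [|x l IH]; [unfold sumR; simpl; ring|].
  rewrite sumR_cons, IH. cbn [length filter]. destruct (p x); cbn [length]; rewrite ?S_INR; lra.
Qed.

Lemma len_filter_flat {A B} (P : B -> bool) (f : A -> list B) l :
  INR (length (filter P (flat_map f l))) = sumR (fun x => INR (length (filter P (f x)))) l.
Proof.
  induction l as [|x l IH]; simpl; [reflexivity|].
  rewrite filter_app, length_app, plus_INR, IH. reflexivity.
Qed.

Lemma sumR_map {A B} (f : B -> R) (g : A -> B) l : sumR f (map g l) = sumR (fun x => f (g x)) l.
Proof. unfold sumR; rewrite map_map; reflexivity. Qed.

Lemma flat_map_assoc {A B C} (f : A -> list B) (g : B -> list C) l :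
  flat_map g (flat_map f l) = flat_map (fun x => flat_map g (f x)) l.
Proof. induction l; simpl; [reflexivity|]. rewrite flat_map_app, IHl; reflexivity. Qed.

Lemma filter_false {A} (p : A -> bool) l : (forall x, In x l -> p x = false) -> filter p l = [].
Proof. induction l; simpl; intros H; [reflexivity|]. rewrite H by auto. apply IHl; auto. Qed.

Lemma filter_true {A} (l : list A) : filter (fun _ => true) l = l.
Proof. induction l; simpl; congruence. Qed.

Lemma len_flat_const {A B} (f : A -> list B) k l :
  (forall x, length (f x) = k) -> length (flat_map f l) = (k * length l)%nat.
Proof. intros H; induction l; simpl; [lia|]. rewrite length_app, H, IHl; lia. Qed.

Lemma filter_eqb_one (m : nat) l : NoDup l -> In m l -> length (filter (fun x => Nat.eqb x m) l) = 1%nat.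
Proof.
  induction l as [|a l IH]; intros Hn Hi; [destruct Hi|].
  inversion Hn; subst. simpl. destruct (Nat.eqb_spec a m).
  - subst. simpl. rewrite filter_false; [reflexivity|].
    intros x Hx; destruct (Nat.eqb_spec x m); subst; tauto.
  - destruct Hi; [congruence|]. auto.
Qed.

Lemma len_filter_split {A} (p q : A -> bool) l :
  length (filter p l) = (length (filter (fun x => p x && q x) l) + length (filter (fun x => p x && negb (q x)) l))%nat.
Proof. induction l; simpl; [reflexivity|]. destruct (p a), (q a); simpl; lia. Qed.

Section Geo.
Variable d : nat.

Definition sq (v : point) := sumR (fun c => v c ^ 2) (seq 0 d).
Definition nrm (v : point) := sqrt (sq v).

Lemma sumR_sq_nonneg {A} (f : A -> R) l : 0 <= sumR (fun x => f x ^ 2) l.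
Proof. induction l; [unfold sumR; simpl; lra|]. rewrite sumR_cons. pose proof (pow2_ge_0 (f a)). lra. Qed.

Lemma lagrange_aux {A} (u v : A -> R) l x y :
  x^2 * sumR (fun c => v c ^ 2) l - 2 * x * y * sumR (fun c => u c * v c) l + y^2 * sumR (fun c => u c ^ 2) l
  = sumR (fun c => (x * v c - y * u c) ^ 2) l.
Proof. induction l; [unfold sumR; simpl; ring|]. rewrite !sumR_cons, <- IHl. ring. Qed.

Lemma cauchy {A} (u v : A -> R) l :
  (sumR (fun c => u c * v c) l) ^ 2 <= sumR (fun c => u c ^ 2) l * sumR (fun c => v c ^ 2) l.
Proof.
  induction l as [|a l IH]; [unfold sumR; simpl; lra|].
  rewrite !sumR_cons.
  pose proof (lagrange_aux u v l (u a) (v a)) as H.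
  pose proof (sumR_sq_nonneg (fun c => u a * v c - v a * u c) l).
  nra.
Qed.

Lemma sq_plus (u v : point) : sq (fun c => u c + v c) = sq u + 2 * sumR (fun c => u c * v c) (seq 0 d) + sq v.
Proof. unfold sq. induction (seq 0 d); [unfold sumR; simpl; ring|]. rewrite !sumR_cons, IHl. ring. Qed.

Lemma nrm_nonneg v : 0 <= nrm v.
Proof. apply sqrt_pos. Qed.

Lemma nrm_tri (u v : point) : nrm (fun c => u c + v c) <= nrm u + nrm v.
Proof.
  unfold nrm. rewrite sq_plus.
  pose proof (cauchy u v (seq 0 d)) as H. fold (sq u) (sq v) in H.
  set (C := sumR (fun c => u c * v c) (seq 0 d)) in *.
  assert (Hu : 0 <= sq u) by apply sumR_sq_nonneg.
  assert (Hv : 0 <= sq v) by apply sumR_sq_nonneg.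
  assert (HC : C <= sqrt (sq u) * sqrt (sq v)).
  { rewrite <- sqrt_mult_alt by lra.
    destruct (Rle_dec C 0). { pose proof (sqrt_pos (sq u * sq v)); lra. }
    rewrite <- (sqrt_pow2 C) by lra. apply sqrt_le_1_alt. lra. }
  rewrite <- (sqrt_pow2 (sqrt (sq u) + sqrt (sq v))) by (pose proof (sqrt_pos (sq u)); pose proof (sqrt_pos (sq v)); lra).
  apply sqrt_le_1_alt.
  replace ((sqrt (sq u) + sqrt (sq v)) ^ 2) with (sqrt (sq u) * sqrt (sq u) + 2 * (sqrt (sq u) * sqrt (sq v)) + sqrt (sq v) * sqrt (sq v)) by ring.
  rewrite !sqrt_sqrt by lra. lra.
Qed.

Lemma nrm_scal a v : nrm (fun c => a * v c) = Rabs a * nrm v.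
Proof.
  unfold nrm.
  replace (sq (fun c => a * v c)) with (Rsqr a * sq v).
  - rewrite sqrt_mult_alt by apply Rle_0_sqr. rewrite sqrt_Rsqr_abs. reflexivity.
  - unfold sq, Rsqr. induction (seq 0 d); [unfold sumR; simpl; ring|]. rewrite !sumR_cons, <- IHl. ring.
Qed.

Lemma nrm_ext u v : (forall c, u c = v c) -> nrm u = nrm v.
Proof. intros H; unfold nrm, sq. f_equal. apply sumR_ext. intros; rewrite H; reflexivity. Qed.

Lemma nrm_zero : nrm (fun _ => 0) = 0.
Proof. unfold nrm, sq. rewrite (sumR_ext _ (fun _ => 0 * 0)) by (intros; ring).
  replace (sumR (fun _ : nat => 0 * 0) (seq 0 d)) with 0. apply sqrt_0.
  induction (seq 0 d); [unfold sumR; simpl; lra|]. rewrite sumR_cons, <- IHl; ring. Qed.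

Lemma nrm_sum {A} (F : A -> point) l :
  nrm (fun c => sumR (fun m => F m c) l) <= sumR (fun m => nrm (F m)) l.
Proof.
  induction l as [|a l IH].
  - unfold sumR; simpl. rewrite nrm_zero. lra.
  - rewrite sumR_cons. eapply Rle_trans.
    2:{ apply Rplus_le_compat_l. exact IH. }
    rewrite (nrm_ext _ (fun c => F a c + sumR (fun m => F m c) l)) by (intros; rewrite sumR_cons; reflexivity).
    apply nrm_tri.
Qed.

Lemma dist_nrm x y : Defs.dist d x y = nrm (fun c => x c - y c).
Proof. reflexivity. Qed.

Lemma dist_sym x y : Defs.dist d x y = Defs.dist d y x.
Proof. rewrite !dist_nrm. rewrite (nrm_ext _ (fun c => (-1) * (y c - x c))) by (intros; ring).
  rewrite nrm_scal. replace (Rabs (-1)) with 1 by (rewrite Rabs_left by lra; ring). ring. Qed.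

Lemma dist_self x : Defs.dist d x x = 0.
Proof. rewrite dist_nrm, (nrm_ext _ (fun _ => 0)) by (intros; ring). apply nrm_zero. Qed.

End Geo.

Lemma sumR_minus_const {A} (f : A -> R) a l :
  sumR (fun x => f x - a) l = sumR f l - a * INR (length l).
Proof. induction l; [unfold sumR; simpl; ring|]. rewrite !sumR_cons, IHl.
  cbn [length]; rewrite S_INR; ring. Qed.

Lemma bary_bound d (T : simplex) j E : (j <= d)%nat ->
  (forall l, (l <= d)%nat -> Defs.dist d (T l) (T j) <= E) ->
  Defs.dist d (barycenter d T) (T j) <= INR d / INR (d + 1) * E.
Proof.
  intros Hj H.
  assert (Hpos : 0 < INR (S d)) by (apply lt_0_INR; lia).
  rewrite dist_nrm.
  rewrite (nrm_ext d _ (fun c => (/ INR (S d)) * sumR (fun m => T m c - T j c) (seq 0 (S d)))).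
  2:{ intros c. rewrite sumR_minus_const, length_seq. unfold barycenter.
      change (fold_right Rplus 0 (map (fun m : nat => T m c) (seq 0 (S d)))) with (sumR (fun m => T m c) (seq 0 (S d))).
      field. lra. }
  rewrite nrm_scal, Rabs_right by (left; apply Rinv_0_lt_compat; lra).
  eapply Rle_trans. { apply Rmult_le_compat_l. left; apply Rinv_0_lt_compat; lra.
    apply (nrm_sum d (fun m c => T m c - T j c)). }
  eapply Rle_trans. { apply Rmult_le_compat_l. left; apply Rinv_0_lt_compat; lra.
    apply (sumR_le _ (fun m => if Nat.eqb m j then 0 else E)).
    intros m Hm. apply in_seq in Hm. destruct (Nat.eqb_spec m j).
    - subst. rewrite <- dist_nrm, dist_self. lra.
    - rewrite <- dist_nrm. apply H. lia. }
  rewrite sumR_ite, filter_eqb_one, length_seq.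
  2: apply seq_NoDup. 2: apply in_seq; lia.
  rewrite Nat.add_1_r. replace (INR 1) with 1 by reflexivity. rewrite S_INR in *. apply Req_le. field. lra.
Qed.

Definition cc d := INR d / INR (d + 1).

Lemma cc_range d : 0 <= cc d <= 1.
Proof. unfold cc. replace (INR (d+1)) with (INR d + 1) by (rewrite plus_INR; reflexivity).
  pose proof (pos_INR d). split.
  - apply Rmult_le_pos; [lra|]. left; apply Rinv_0_lt_compat; lra.
  - apply Rmult_le_reg_r with (INR d + 1); [lra|]. unfold Rdiv. rewrite Rmult_assoc, Rinv_l by lra. lra.
Qed.

Definition child d (T : simplex) m := replace_vertex T m (barycenter d T).

Definition Bnd d D (T : simplex) := forall i j, (i <= d)%nat -> (j <= d)%nat -> Defs.dist d (T i) (T j) <= D.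

Definition Inv d D (nw : nat -> bool) (T : simplex) :=
  Bnd d D T /\ forall i j, (i <= d)%nat -> (j <= d)%nat -> nw i = true -> i <> j ->
     Defs.dist d (T i) (T j) <= cc d * D.

Lemma inv_step d D nw T m : Inv d D nw T -> 0 <= D -> (m <= d)%nat ->
  Inv d D (fun x => nw x || Nat.eqb x m) (child d T m).
Proof.
  intros [HB HN] HD Hm.
  pose proof (cc_range d) as Hc.
  assert (Hb : forall j, (j <= d)%nat -> Defs.dist d (barycenter d T) (T j) <= cc d * D).
  { intros j Hj. apply bary_bound; auto. }
  assert (Hcd : cc d * D <= D) by nra.
  unfold child, replace_vertex. split.
  - intros i j Hi Hj. destruct (Nat.eqb_spec i m), (Nat.eqb_spec j m).
    + rewrite dist_self; lra.
    + specialize (Hb j Hj); lra.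
    + rewrite dist_sym. specialize (Hb i Hi); lra.
    + apply HB; auto.
  - intros i j Hi Hj Hn Hij. destruct (Nat.eqb_spec i m), (Nat.eqb_spec j m).
    + congruence.
    + apply Hb; auto.
    + rewrite dist_sym. apply Hb; auto.
    + apply HN; auto. rewrite Bool.orb_false_r in Hn. exact Hn.
Qed.

Lemma fold_max_le l r : (forall x, In x l -> x <= r) -> 0 <= r -> fold_right Rmax 0 l <= r.
Proof. induction l; simpl; intros H Hr; auto. apply Rmax_lub; auto. Qed.

Lemma fold_max_ge l x : In x l -> x <= fold_right Rmax 0 l.
Proof. induction l; simpl; intros H; [destruct H|]. destruct H.
  - subst. apply Rmax_l.
  - eapply Rle_trans; [apply IHl; auto| apply Rmax_r]. Qed.

Lemma bnd_diam d r T : Bnd d r T -> 0 <= r -> diam_gt d r T = false.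
Proof.
  intros H Hr. unfold diam_gt. destruct (Rlt_dec r (diameter d T)); auto.
  exfalso. assert (diameter d T <= r); [|lra].
  unfold diameter. apply fold_max_le; auto.
  intros x Hx. apply in_map_iff in Hx. destruct Hx as [[i j] [<- Hij]].
  apply in_prod_iff in Hij. destruct Hij as [Hi Hj]. apply in_seq in Hi, Hj. simpl. apply H; lia.
Qed.

Lemma diam_bnd d r T : diam_gt d r T = false -> Bnd d r T.
Proof.
  unfold diam_gt. destruct (Rlt_dec r (diameter d T)); [discriminate|]. intros _ i j Hi Hj.
  apply Rnot_lt_le in n. eapply Rle_trans; [|exact n]. unfold diameter.
  apply fold_max_ge. apply in_map_iff. exists (i, j). split; auto.
  apply in_prod; apply in_seq; lia.
Qed.

Lemma subdiv_add d a b T : subdiv d (a + b) T = flat_map (subdiv d b) (subdiv d a T).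
Proof.
  induction b.
  - rewrite Nat.add_0_r. simpl. induction (subdiv d a T); simpl; congruence.
  - rewrite Nat.add_succ_r. simpl. rewrite IHb, flat_map_assoc. reflexivity.
Qed.

Lemma children_eq d T : children d T = map (child d T) (seq 0 (S d)).
Proof. reflexivity. Qed.

Lemma subdiv_S d n T : subdiv d (S n) T = flat_map (subdiv d n) (map (child d T) (seq 0 (S d))).
Proof. change (S n) with (1 + n)%nat. rewrite subdiv_add. simpl. rewrite app_nil_r. reflexivity. Qed.

Lemma subdiv_len d n T : length (subdiv d n T) = (S d ^ n)%nat.
Proof.
  induction n; simpl; [reflexivity|]. rewrite (len_flat_const _ (S d)).
  - rewrite IHn. reflexivity.
  - intros; unfold children; rewrite length_map, length_seq; reflexivity.
Qed.

Lemma bnd_subdiv d D n T : Bnd d D T -> 0 <= D -> forall U, In U (subdiv d n T) -> Bnd d D U.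
Proof.
  intros HT HD. induction n; simpl.
  - intros U [<-|[]]; auto.
  - intros U HU. apply in_flat_map in HU. destruct HU as [V [HV HU]].
    unfold children in HU. apply in_map_iff in HU. destruct HU as [m [<- Hm]]. apply in_seq in Hm.
    apply (inv_step d D (fun _ => false) V m); [|auto|lia].
    split; [auto|]. intros; discriminate.
Qed.

Definition cnt d r n T := length (filter (diam_gt d r) (subdiv d n T)).

Lemma cnt_zero d r n T : Bnd d r T -> 0 <= r -> cnt d r n T = 0%nat.
Proof. intros H Hr. unfold cnt. rewrite filter_false; auto.
  intros U HU. apply bnd_diam; auto. eapply bnd_subdiv; eauto. Qed.

Lemma cnt_le d r n T : (cnt d r n T <= S d ^ n)%nat.
Proof. unfold cnt. rewrite <- (subdiv_len d n T). apply filter_length_le. Qed.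

Lemma cnt_flat d r n T : INR (cnt d r (S n) T) = sumR (fun m => INR (cnt d r n (child d T m))) (seq 0 (S d)).
Proof. unfold cnt. rewrite subdiv_S, len_filter_flat, sumR_map. reflexivity. Qed.

Lemma cnt_le_R d r n T : INR (cnt d r n T) <= INR (S d) ^ n.
Proof. rewrite <- pow_INR. apply le_INR, cnt_le. Qed.

Lemma block d D : 0 <= D -> forall n nw T, Inv d D nw T ->
  length (filter (fun x => negb (nw x)) (seq 0 (S d))) = S n ->
  INR (cnt d (cc d * D) n T) + INR (fact (S n)) <= INR (S d) ^ n.
Proof.
  intros HD. pose proof (cc_range d) as Hc. induction n as [|n IH]; intros nw T [HB HN] Hlen.
  - assert (Hf : diam_gt d (cc d * D) T = false).
    2:{ unfold cnt. cbn [subdiv filter]. rewrite Hf. simpl. lra. }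
    apply bnd_diam; [|nra].
    intros i j Hi Hj. destruct (Nat.eq_dec i j). { subst. rewrite dist_self. nra. }
    destruct (nw i) eqn:Ei. { apply HN; auto. }
    destruct (nw j) eqn:Ej. { rewrite dist_sym. apply HN; auto. }
    exfalso.
    assert (length [i; j] <= length (filter (fun x => negb (nw x)) (seq 0 (S d))))%nat.
    { apply NoDup_incl_length.
      - constructor; [simpl; intuition|]. constructor; [simpl; auto|constructor].
      - intros x Hx. apply filter_In. destruct Hx as [<-|[<-|[]]]; split;
          try (apply in_seq; lia); rewrite ?Ei, ?Ej; reflexivity. }
    rewrite Hlen in H. simpl in H. lia.
  - rewrite cnt_flat.
    eapply Rle_trans. { apply Rplus_le_compat_r.
      apply (sumR_le _ (fun m => if negb (nw m) then INR (S d) ^ n - INR (fact (S n)) else INR (S d) ^ n)).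
      intros m Hm. apply in_seq in Hm. destruct (nw m) eqn:Em; cbn [negb].
      - apply cnt_le_R.
      - assert (INR (cnt d (cc d * D) n (child d T m)) + INR (fact (S n)) <= INR (S d) ^ n); [|lra].
        apply (IH (fun x => nw x || Nat.eqb x m)).
        + apply inv_step; auto. split; auto. lia.
        + rewrite (len_filter_split _ (fun x => Nat.eqb x m)) in Hlen.
          rewrite (filter_ext (fun x => negb (nw x) && (x =? m)%nat) (fun x => (x =? m)%nat)) in Hlen.
          2:{ intros x. destruct (Nat.eqb_spec x m); [subst; rewrite Em; reflexivity|].
              apply Bool.andb_false_r. }
          rewrite filter_eqb_one in Hlen; [|apply seq_NoDup|apply in_seq; lia].
          rewrite (filter_ext _ (fun x => negb (nw x) && negb (x =? m)%nat)).
          2:{ intros x. apply Bool.negb_orb. }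
          lia. }
    rewrite sumR_ite, length_seq.
    replace (fact (S (S n))) with (S (S n) * fact (S n))%nat by reflexivity.
    rewrite mult_INR, Hlen. rewrite !S_INR. simpl pow. lra.
Qed.

Lemma exp_pow x n : exp x ^ n = exp (INR n * x).
Proof. induction n. simpl. rewrite Rmult_0_l, exp_0. reflexivity.
  rewrite S_INR. simpl pow. rewrite IHn, <- exp_plus. f_equal. ring. Qed.

Lemma fact_bound n : INR (S n) ^ n <= exp (INR n) * INR (fact n).
Proof.
  induction n. { simpl. rewrite exp_0. lra. }
  set (a := INR (S n)).
  assert (Ha : 0 < a) by (unfold a; apply lt_0_INR; lia).
  replace (INR (S (S n))) with (a * (1 + / a)) by (rewrite (S_INR (S n)); fold a; field; lra).
  rewrite Rpow_mult_distr.
  assert (H1 : (1 + / a) ^ S n <= exp 1).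
  { replace (exp 1) with (exp (/ a) ^ S n).
    - apply pow_incr. split. { pose proof (Rinv_0_lt_compat a Ha); lra. }
      left. apply exp_ineq1. apply Rinv_neq_0_compat; lra.
    - rewrite exp_pow. f_equal. fold a. field. lra. }
  replace (exp a) with (exp (INR n) * exp 1) by (unfold a; rewrite <- exp_plus, S_INR; reflexivity).
  replace (fact (S n)) with (S n * fact n)%nat by reflexivity. rewrite mult_INR. fold a.
  replace (a ^ S n) with (a * a ^ n) by reflexivity.
  assert (0 <= (1 + / a) ^ S n) by (apply pow_le; pose proof (Rinv_0_lt_compat a Ha); lra).
  assert (0 <= a ^ n) by (apply pow_le; lra).
  pose proof (exp_pos 1). pose proof (exp_pos (INR n)).
  assert (a * a ^ n * (1 + / a) ^ S n <= a * (exp (INR n) * INR (fact n)) * exp 1).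
  { apply Rmult_le_compat.
    - apply Rmult_le_pos; lra.
    - lra.
    - apply Rmult_le_compat_l. lra. exact IHn.
    - lra. }
  lra.
Qed.

Definition qq d := 1 - exp (- INR d).

Lemma qq_nonneg d : 0 <= qq d.
Proof. unfold qq. pose proof (exp_pos (- INR d)). pose proof (pos_INR d).
  assert (exp (- INR d) * exp (INR d) = 1) by (rewrite <- exp_plus; replace (- INR d + INR d) with 0 by ring; apply exp_0).
  destruct (Req_dec (INR d) 0) as [E|E].
  - rewrite E, Ropp_0, exp_0. lra.
  - pose proof (exp_ineq1 (INR d) E). nra.
Qed.

Lemma block_q d D T : 0 <= D -> Bnd d D T -> INR (cnt d (cc d * D) d T) <= qq d * INR (S d) ^ d.
Proof.
  intros HD HB.
  pose proof (block d D HD d (fun _ => false) T) as H.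
  assert (H' : INR (cnt d (cc d * D) d T) + INR (fact (S d)) <= INR (S d) ^ d).
  { apply H. split; auto. intros; discriminate. cbn [negb]. rewrite filter_true, length_seq. reflexivity. }
  pose proof (fact_bound d).
  assert (INR (fact d) <= INR (fact (S d))) by (apply le_INR; simpl; lia).
  assert (exp (- INR d) * exp (INR d) = 1) by (rewrite <- exp_plus; replace (- INR d + INR d) with 0 by ring; apply exp_0).
  pose proof (exp_pos (- INR d)).
  assert (exp (- INR d) * INR (S d) ^ d <= exp (- INR d) * (exp (INR d) * INR (fact d))) by
    (apply Rmult_le_compat_l; lra).
  rewrite <- Rmult_assoc, H2, Rmult_1_l in H4.
  unfold qq. lra.
Qed.

Lemma stageB d k : forall T D, 0 <= D -> Bnd d D T ->
  INR (cnt d (cc d * D) (k * d) T) <= qq d ^ k * INR (S d) ^ (k * d).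
Proof.
  pose proof (cc_range d) as Hc. pose proof (qq_nonneg d) as Hq.
  induction k; intros T D HD HB.
  - simpl. pose proof (cnt_le_R d (cc d * D) 0 T). simpl in H. lra.
  - rewrite Nat.mul_succ_l. unfold cnt. rewrite subdiv_add, len_filter_flat.
    eapply Rle_trans.
    { apply (sumR_le _ (fun U => if diam_gt d (cc d * D) U then qq d * INR (S d) ^ d else 0)).
      intros U HU. destruct (diam_gt d (cc d * D) U) eqn:E.
      - apply block_q; auto. eapply bnd_subdiv; eauto.
      - fold (cnt d (cc d * D) d U). rewrite cnt_zero; [simpl; lra| |nra]. apply diam_bnd; auto. }
    rewrite sumR_ite. fold (cnt d (cc d * D) (k * d) T).
    pose proof (IHk T D HD HB).
    assert (0 <= qq d * INR (S d) ^ d) by (apply Rmult_le_pos; auto; apply pow_le, pos_INR).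
    rewrite pow_add. replace (qq d ^ S k) with (qq d * qq d ^ k) by reflexivity.
    assert ((qq d * INR (S d) ^ d - 0) * INR (cnt d (cc d * D) (k * d) T) <=
            (qq d * INR (S d) ^ d) * (qq d ^ k * INR (S d) ^ (k * d))) by (rewrite Rminus_0_r; apply Rmult_le_compat_l; auto).
    rewrite Rmult_0_l, Rplus_0_l. eapply Rle_trans; [exact H1|]. right; ring.
Qed.

Lemma stageC d k z : forall T D, 0 <= D -> Bnd d D T ->
  INR (cnt d (cc d ^ z * D) (z * (k * d)) T) <= INR z * qq d ^ k * INR (S d) ^ (z * (k * d)).
Proof.
  pose proof (cc_range d) as Hc. pose proof (qq_nonneg d) as Hq.
  assert (Hqk : 0 <= qq d ^ k) by (apply pow_le; auto).
  induction z; intros T D HD HB.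
  - simpl. rewrite Rmult_1_l, cnt_zero; auto. simpl; lra.
  - replace (S z * (k * d))%nat with (k * d + z * (k * d))%nat by lia.
    set (N := INR (S d) ^ (z * (k * d))).
    assert (HN : 0 <= N) by (apply pow_le, pos_INR).
    assert (Hb : 0 <= INR z * qq d ^ k * N) by (apply Rmult_le_pos; auto; apply Rmult_le_pos; auto; apply pos_INR).
    unfold cnt. rewrite subdiv_add, len_filter_flat.
    eapply Rle_trans.
    { apply (sumR_le _ (fun U => if diam_gt d (cc d * D) U then N + INR z * qq d ^ k * N else INR z * qq d ^ k * N)).
      intros U HU. destruct (diam_gt d (cc d * D) U) eqn:E.
      - fold (cnt d (cc d ^ S z * D) (z * (k * d)) U). pose proof (cnt_le_R d (cc d ^ S z * D) (z * (k * d)) U).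
        fold N in H. lra.
      - fold (cnt d (cc d ^ S z * D) (z * (k * d)) U).
        replace (cc d ^ S z * D) with (cc d ^ z * (cc d * D)) by (simpl; ring).
        apply IHz; [nra|]. apply diam_bnd; auto. }
    rewrite sumR_ite. fold (cnt d (cc d * D) (k * d) T).
    pose proof (stageB d k T D HD HB).
    rewrite subdiv_len, pow_INR, pow_add. fold N.
    replace (N + INR z * qq d ^ k * N - INR z * qq d ^ k * N) with N by ring.
    assert (N * INR (cnt d (cc d * D) (k * d) T) <= N * (qq d ^ k * INR (S d) ^ (k * d))) by
      (apply Rmult_le_compat_l; auto).
    rewrite (S_INR z). eapply Rle_trans; [apply Rplus_le_compat_l; exact H0|]. right; ring.
Qed.

Theorem lemma4 (d k z : nat) (S0 : simplex) :
  (1 <= d)%nat -> (1 <= k)%nat -> (1 <= z)%nat ->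
  regular_unit d S0 ->
  let s := (z * k * d)%nat in
  INR (length (filter (diam_gt d ((INR d / INR (d + 1)) ^ z)) (subdiv d s S0)))
    / INR ((d + 1) ^ s)
  <= INR z * (1 - exp (- INR d)) ^ k.
Proof.
  intros Hd Hk Hz Hreg. cbv zeta.
  assert (HB : Bnd d 1 S0).
  { intros i j Hi Hj. destruct (Nat.eq_dec i j).
    - subst. rewrite dist_self. lra.
    - rewrite (Hreg i j Hi Hj n). lra. }
  pose proof (stageC d k z S0 1 ltac:(lra) HB) as H.
  rewrite Rmult_1_r in H. unfold cnt, cc, qq in H.
  rewrite Nat.mul_assoc in H.
  rewrite pow_INR. rewrite Nat.add_1_r in *.
  assert (HP : 0 < INR (S d) ^ (z * k * d)) by (apply pow_lt, lt_0_INR; lia).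
  apply Rmult_le_reg_r with (INR (S d) ^ (z * k * d)); auto.
  unfold Rdiv. rewrite Rmult_assoc, Rinv_l by lra. lra.
Qed.
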